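(* For every integer $v\ge 1$ there is a polynomial $p_{v-1}(x)$ of degree $v-1$ with real coefficients such that for all integers $m\ge1$, $$S_{m,v}=(2m^2)^{-v}(m^2-1)\,p_{v-1}(m^2).$$ Its leading coefficient is $2^{v}\zeta(2v)$, and its constant term is $$p_{v-1}(0)=\frac{2^{v}}{(2v-1)!}\sum_{j=0}^{v-1}\pi^{2j}\,s(v,j)\,\Gamma(2v-2j)\,\zeta(2v-2j).$$
   Context: The Gardner–Fisher sum is $S_{m,v}=\left(\frac{\pi}{2m}\right)^{2v}\sum_{k=1}^{m-1}\sin^{-2v}\!\left(\frac{k\pi}{2m}\right)$. For integers $v\ge1$ and $0\le n\le v-1$, $s(v,n)$ denotes the $n$-th elementary symmetric polynomial evaluated at $1^2,2^2,\dots,(v-1)^2$, with $s(v,0)=1$. $\zeta$ is the Riemann zeta function. *)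

(* Defs.v *)
From Stdlib Require Import Reals List Arith Factorial ClassicalEpsilon.
Import ListNotations.
Open Scope R_scope.

Definition lsum (f : nat -> R) (l : list nat) : R :=
  fold_right (fun k acc => f k + acc) 0 l.

Definition GF_S (m v : nat) : R :=
  (PI / (2 * INR m)) ^ (2 * v) *
  lsum (fun k => / (sin (INR k * PI / (2 * INR m))) ^ (2 * v)) (seq 1 (m - 1)).

Fixpoint esym (l : list R) (n : nat) : R :=
  match l, n with
  | [], O => 1
  | [], S _ => 0
  | _ :: _, O => 1
  | x :: l', S n' => esym l' (S n') + x * esym l' n'
  end.

Definition s_sym (v n : nat) : R :=
  esym (map (fun i => INR i ^ 2) (seq 1 (v - 1))) n.

(* Riemann zeta at a natural argument s (meaningful for s >= 2):
   the sum of the series sum_{n>=1} 1/n^s. *)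
Definition zeta (s : nat) : R :=
  epsilon (inhabits 0) (fun l => infinite_sum (fun n => / INR (n + 1) ^ s) l).

Definition poly_eval (c : nat -> R) (d : nat) (x : R) : R :=
  lsum (fun i => c i * x ^ i) (seq 0 d).

(* Main.v *)
Require Import Defs.
From Stdlib Require Import Reals List Arith Factorial.
From Stdlib Require Import Lra Lia ClassicalEpsilon.
From Coquelicot Require Import Coquelicot.
Import ListNotations.
Open Scope R_scope.


Fixpoint fs (f : nat -> R) (n : nat) : R :=
  match n with O => 0 | S n' => fs f n' + f n' end.

Lemma fs_ext f g n : (forall i, (i < n)%nat -> f i = g i) -> fs f n = fs g n.
Proof. induction n; simpl; intros H; auto. rewrite IHn by (intros; apply H; lia). rewrite H by lia; auto. Qed.

Lemma fs_plus f g n : fs (fun i => f i + g i) n = fs f n + fs g n.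
Proof. induction n; simpl; [lra|]. rewrite IHn; lra. Qed.

Lemma fs_scal c f n : fs (fun i => c * f i) n = c * fs f n.
Proof. induction n; simpl; [lra|]. rewrite IHn; lra. Qed.

Lemma fs_minus f g n : fs (fun i => f i - g i) n = fs f n - fs g n.
Proof. induction n; simpl; [lra|]. rewrite IHn; lra. Qed.

Lemma fs_zero n : fs (fun _ => 0) n = 0.
Proof. induction n; simpl; lra. Qed.

Lemma fs_add f n m : fs f (n + m) = fs f n + fs (fun i => f (n + i)%nat) m.
Proof. induction m; simpl. rewrite Nat.add_0_r; lra. rewrite Nat.add_succ_r; simpl. rewrite IHm; lra. Qed.

Lemma fs_shift f n : fs f (S n) = f O + fs (fun i => f (S i)) n.
Proof. change (S n) with (1 + n)%nat. rewrite fs_add. simpl. lra. Qed.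

Lemma fs_rev f n : fs f n = fs (fun i => f (n - 1 - i)%nat) n.
Proof.
  induction n; [reflexivity|].
  change (fs f (S n)) with (fs f n + f n).
  rewrite fs_shift. replace (S n - 1 - 0)%nat with n by lia.
  rewrite IHn. rewrite Rplus_comm. f_equal. apply fs_ext. intros i Hi. f_equal. lia.
Qed.

Lemma fs_swap (F : nat -> nat -> R) n m :
  fs (fun i => fs (fun j => F i j) m) n = fs (fun j => fs (fun i => F i j) n) m.
Proof.
  induction n; simpl. rewrite fs_zero; auto.
  rewrite IHn, <- fs_plus. auto.
Qed.

Lemma fs_trunc (F : nat -> R) n k : (k <= n)%nat ->
  fs F k = fs (fun j => if Nat.ltb j k then F j else 0) n.
Proof.
  intros H. replace n with (k + (n - k))%nat by lia. rewrite fs_add.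
  rewrite (fs_ext _ (fun j => 0) (n - k)). rewrite fs_zero, Rplus_0_r.
  apply fs_ext. intros i Hi. destruct (Nat.ltb_spec i k); [auto|lia].
  intros i Hi. destruct (Nat.ltb_spec (k + i) k); [lia|auto].
Qed.

Lemma fs_tri (F : nat -> nat -> R) n :
  fs (fun i => fs (fun j => F i j) (n - i)) n = fs (fun j => fs (fun i => F i j) (n - j)) n.
Proof.
  rewrite (fs_ext _ (fun i => fs (fun j => if Nat.ltb (i + j) n then F i j else 0) n)).
  rewrite fs_swap. apply fs_ext. intros j Hj. rewrite (fs_trunc _ n (n - j)) by lia.
  apply fs_ext. intros i Hi. destruct (Nat.ltb_spec (i + j) n); destruct (Nat.ltb_spec i (n - j)); auto; lia.
  intros i Hi. rewrite (fs_trunc _ n (n - i)) by lia.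
  apply fs_ext. intros j Hj. destruct (Nat.ltb_spec (i + j) n); destruct (Nat.ltb_spec j (n - i)); auto; lia.
Qed.

Lemma lsum_seq f a n : lsum f (seq a n) = fs (fun i => f (a + i)%nat) n.
Proof.
  revert a. induction n; intros a; [reflexivity|].
  simpl lsum. rewrite IHn. rewrite fs_shift. rewrite Nat.add_0_r. f_equal. apply fs_ext. intros; f_equal; lia.
Qed.

Lemma sum_n_fs a n : sum_n a n = fs a (S n).
Proof. induction n. simpl. rewrite sum_O. lra. rewrite sum_Sn, IHn. simpl. reflexivity. Qed.


Lemma is_series_fs a l : is_series a l <-> is_lim_seq (fun n => fs a n) l.
Proof.
  split; intros H.
  - apply is_lim_seq_incr_1. eapply is_lim_seq_ext; [|exact H]. intros n. apply sum_n_fs.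
  - apply is_lim_seq_incr_1 in H. change (is_lim_seq (sum_n a) l).
    eapply is_lim_seq_ext; [|exact H]. intros n. simpl. rewrite sum_n_fs. reflexivity.
Qed.

Lemma fs_nonneg f n : (forall i, 0 <= f i) -> 0 <= fs f n.
Proof. intros H; induction n; simpl; [lra|]. specialize (H n); lra. Qed.

Lemma fs_le f g n : (forall i, (i < n)%nat -> f i <= g i) -> fs f n <= fs g n.
Proof. induction n; simpl; intros H; [lra|]. assert (f n <= g n) by (apply H; lia).
  assert (fs f n <= fs g n) by (apply IHn; intros; apply H; lia). lra. Qed.

Lemma fs_mono f n m : (forall i, 0 <= f i) -> (n <= m)%nat -> fs f n <= fs f m.
Proof. intros H Hnm. replace m with (n + (m - n))%nat by lia. rewrite fs_add.
  assert (0 <= fs (fun i => f (n + i)%nat) (m - n)) by (apply fs_nonneg; auto). lra. Qed.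

Lemma series_ge_fs a l n : (forall i, 0 <= a i) -> is_series a l -> fs a n <= l.
Proof.
  intros Ha H. apply is_series_fs in H.
  assert (Rbar_le (fs a n) l).
  { apply (is_lim_seq_le (fun _ => fs a n) (fun k => fs a (n + k)%nat)).
    intros k. apply fs_mono; [exact Ha| lia]. apply is_lim_seq_const.
    apply (is_lim_seq_incr_n (fun k => fs a k) n) in H. eapply is_lim_seq_ext; [|exact H].
    intros k; simpl; rewrite Nat.add_comm; reflexivity. }
  exact H0.
Qed.

Lemma INR_S_pos n : 0 < INR (S n).
Proof. apply lt_0_INR; lia. Qed.

Lemma tele_series : is_series (fun n => / INR (n + 1) - / INR (n + 2)) 1.
Proof.
  apply is_series_fs.
  assert (E : forall n, fs (fun n => / INR (n + 1) - / INR (n + 2)) n = 1 - / INR (n + 1)).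
  { induction n. simpl. lra. simpl fs. rewrite IHn. replace (S n + 1)%nat with (n + 2)%nat by lia. lra. }
  eapply is_lim_seq_ext. intros n; symmetry; apply E.
  replace (Finite 1) with (Rbar_minus 1 0) by (simpl; f_equal; ring).
  apply is_lim_seq_minus'. apply is_lim_seq_const.
  replace (Finite 0) with (Rbar_inv p_infty) by reflexivity.
  apply is_lim_seq_inv; [|discriminate].
  apply (is_lim_seq_incr_n INR 1). apply is_lim_seq_INR.
Qed.

Lemma invpow_le p n : (2 <= p)%nat -> 0 < / INR (n + 1) ^ p <= 2 * (/ INR (n + 1) - / INR (n + 2)).
Proof.
  intros Hp. assert (H1 : 1 <= INR (n + 1)) by (rewrite plus_INR; simpl; pose proof (pos_INR n); lra).
  assert (H2 : INR (n + 2) = INR (n + 1) + 1) by (rewrite !plus_INR; simpl; lra).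
  split. apply Rinv_0_lt_compat, pow_lt; lra.
  rewrite H2. set (x := INR (n + 1)) in *.
  assert (x ^ 2 <= x ^ p). { replace p with (2 + (p - 2))%nat by lia. rewrite pow_add.
    assert (1 <= x ^ (p - 2)) by (apply pow_R1_Rle; lra). assert (0 < x^2) by (apply pow_lt; lra). nra. }
  assert (/ x ^ p <= / x ^ 2) by (apply Rinv_le_contravar; [apply pow_lt; lra| lra]).
  assert (/ x ^ 2 <= 2 * (/ x - / (x + 1))).
  { replace (2 * (/ x - / (x + 1))) with (/ x ^ 2 + (x - 1) / (x ^ 2 * (x + 1))) by (field; lra).
    assert (0 <= (x - 1) / (x ^ 2 * (x + 1))).
    { apply Rdiv_le_0_compat. lra. assert (0 < x^2) by (apply pow_lt; lra). nra. }
    lra. }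
  lra.
Qed.

Lemma ex_series_invpow p : (2 <= p)%nat -> ex_series (fun n => / INR (n + 1) ^ p).
Proof.
  intros Hp. apply (@ex_series_le R_AbsRing R_CompleteNormedModule _ (fun n => 2 * (/ INR (n + 1) - / INR (n + 2)))).
  intros n. destruct (invpow_le p n Hp). change (Rabs (/ INR (n + 1) ^ p) <= 2 * (/ INR (n + 1) - / INR (n + 2))). rewrite Rabs_pos_eq; lra.
  exists (2 * 1). exact (is_series_scal_l 2 _ 1 tele_series).
Qed.

Lemma zeta_spec p : (2 <= p)%nat -> is_series (fun n => / INR (n + 1) ^ p) (zeta p).
Proof.
  intros Hp. unfold zeta. apply is_series_Reals.
  apply epsilon_spec. destruct (ex_series_invpow p Hp) as [l Hl]. exists l. apply is_series_Reals; exact Hl.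
Qed.

Lemma zeta_pos p : (2 <= p)%nat -> 0 < zeta p.
Proof.
  intros Hp. pose proof (series_ge_fs _ _ 1 (fun i => Rlt_le _ _ (proj1 (invpow_le p i Hp))) (zeta_spec p Hp)).
  simpl in H. pose proof (proj1 (invpow_le p 0 Hp)). simpl in H0. lra.
Qed.


Lemma fs_block a M N : fs a (N * M) = fs (fun k => fs (fun n => a (n * M + k)%nat) N) M.
Proof.
  induction N. simpl. rewrite fs_zero. reflexivity.
  replace (S N * M)%nat with (N * M + M)%nat by lia. rewrite fs_add, IHN.
  rewrite <- fs_plus. apply fs_ext. intros k Hk. simpl. reflexivity.
Qed.

Lemma is_lim_seq_fs (u : nat -> nat -> R) (l : nat -> R) M :
  (forall k, (k < M)%nat -> is_lim_seq (u k) (l k)) ->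
  is_lim_seq (fun N => fs (fun k => u k N) M) (fs l M).
Proof.
  induction M; intros H. simpl. apply is_lim_seq_const.
  simpl. apply is_lim_seq_plus'. apply IHM; intros; apply H; lia. apply H; lia.
Qed.

Lemma fs_le_sum f M k : (forall i, 0 <= f i) -> (k < M)%nat -> f k <= fs f M.
Proof.
  intros Hf Hk. replace M with (S k + (M - S k))%nat by lia. rewrite fs_add. simpl.
  pose proof (fs_nonneg f k Hf). pose proof (fs_nonneg (fun i => f (S (k + i))) (M - S k) (fun i => Hf _)). lra.
Qed.

Lemma interleave a l M : (0 < M)%nat -> (forall i, 0 <= a i) -> is_series a l ->
  (forall k, (k < M)%nat -> ex_series (fun n => a (n * M + k)%nat)) /\
  fs (fun k => Series (fun n => a (n * M + k)%nat)) M = l.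
Proof.
  intros HM Ha Hl.
  assert (Hex : forall k, (k < M)%nat -> ex_series (fun n => a (n * M + k)%nat)).
  { intros k Hk. destruct (ex_finite_lim_seq_incr (fun N => fs (fun n => a (n * M + k)%nat) N) l) as [L HL].
    - intros n. simpl. pose proof (Ha (n * M + k)%nat). lra.
    - intros N. eapply Rle_trans. 2: apply (series_ge_fs a l (N * M) Ha Hl).
      rewrite fs_block. apply (fs_le_sum (fun k0 => fs (fun n => a (n * M + k0)%nat) N) M k); auto.
      intros; apply fs_nonneg; auto.
    - exists L. apply is_series_fs. exact HL. }
  split; auto.
  assert (H1 : is_lim_seq (fun N => fs a (N * M)) l).
  { apply is_series_fs in Hl. apply (is_lim_seq_subseq (fun n => fs a n) l (fun N => (N * M)%nat)); auto.
    intros P [N HN]. exists N. intros n Hn. apply HN. nia. }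
  assert (H2 : is_lim_seq (fun N => fs (fun k => fs (fun n => a (n * M + k)%nat) N) M)
              (fs (fun k => Series (fun n => a (n * M + k)%nat)) M)).
  { apply (is_lim_seq_fs (fun k N => fs (fun n => a (n * M + k)%nat) N)). intros k Hk.
    apply is_series_fs. apply Series_correct. apply Hex; auto. }
  assert (H3 := is_lim_seq_ext _ _ _ (fun N => fs_block a M N) H1).
  pose proof (is_lim_seq_unique _ _ H3). pose proof (is_lim_seq_unique _ _ H2). rewrite H in H0.
  injection H0; auto.
Qed.


Definition tG (p : nat) (x : R) (n : nat) : R :=
  / (x + INR n * PI) ^ p + / (x - INR (S n) * PI) ^ p.
Definition G (p : nat) (x : R) : R := Series (tG p x).

Lemma INR2 : INR 2 = 2. Proof. simpl; lra. Qed.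

Lemma pow_even_opp y s : (- y) ^ (2 * s) = y ^ (2 * s).
Proof. rewrite !pow_mult. f_equal. ring. Qed.

Lemma inv_cmul_pow c Y p : c <> 0 -> Y <> 0 -> / (c * Y) ^ p = (/ c) ^ p * / Y ^ p.
Proof. intros. rewrite Rpow_mult_distr, Rinv_mult, pow_inv. reflexivity. Qed.

Section Lattice.
Variable s m : nat.
Hypothesis Hs : (1 <= s)%nat.
Hypothesis Hm : (1 <= m)%nat.
Let p := (2 * s)%nat.
Let a := fun i : nat => / INR (i + 1) ^ p.
Let M := (2 * m)%nat.
Let Sb := fun r : nat => Series (fun n => a (n * M + r)%nat).

Lemma p2 : (2 <= p)%nat. Proof. unfold p; lia. Qed.
Lemma a_nonneg i : 0 <= a i. Proof. unfold a. left. apply (proj1 (invpow_le p i p2)). Qed.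
Lemma a_series : is_series a (zeta p). Proof. apply zeta_spec, p2. Qed.

Lemma IL : (forall k, (k < M)%nat -> ex_series (fun n => a (n * M + k)%nat)) /\ fs Sb M = zeta p.
Proof. apply interleave. unfold M; lia. apply a_nonneg. apply a_series. Qed.

Lemma mpos : 0 < INR m. Proof. apply lt_0_INR; lia. Qed.

Lemma tG_eq i n : (i < m - 1)%nat ->
  tG p (INR (1 + i) * PI / (2 * INR m)) n =
  (2 * INR m / PI) ^ p * (a (n * M + i)%nat + a (n * M + (M - i - 2))%nat).
Proof.
  intros Hi. pose proof mpos. pose proof PI_RGT_0. unfold tG, a, M.
  set (c := PI / (2 * INR m)).
  assert (Hc : c <> 0) by (unfold c; apply Rgt_not_eq, Rdiv_lt_0_compat; lra).
  assert (E1 : INR (1 + i) * PI / (2 * INR m) + INR n * PI = c * INR (n * (2 * m) + i + 1)).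
  { unfold c. rewrite !plus_INR, !mult_INR, INR2, INR_1. field. lra. }
  assert (E2 : INR (1 + i) * PI / (2 * INR m) - INR (S n) * PI = - (c * INR (n * (2 * m) + (2 * m - i - 2) + 1))).
  { assert (H1 : (n*(2*m) + (2*m-i-2) + 1 + (i + 1) = n*(2*m) + 2*m)%nat) by lia.
    apply (f_equal INR) in H1. rewrite !plus_INR, !mult_INR, INR2, INR_1 in H1.
    unfold c. rewrite S_INR, !plus_INR, !mult_INR, INR2, INR_1.
    rewrite S_INR. replace (INR (2 * m - i - 2)) with (2 * INR m - INR i - 2) by lra. field. lra. }
  rewrite E1, E2. unfold p. rewrite pow_even_opp. fold p.
  rewrite !inv_cmul_pow; auto.
  2,3: apply Rgt_not_eq, lt_0_INR; lia.
  replace (/ c) with (2 * INR m / PI) by (unfold c; field; lra). ring.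
Qed.

Lemma G_eq i : (i < m - 1)%nat ->
  G p (INR (1 + i) * PI / (2 * INR m)) = (2 * INR m / PI) ^ p * (Sb i + Sb (M - i - 2)%nat).
Proof.
  intros Hi. unfold G, Sb. rewrite (Series_ext _ _ (fun n => tG_eq i n Hi)).
  rewrite Series_scal_l. f_equal. apply Series_plus; apply (proj1 IL); unfold M; lia.
Qed.

Lemma Sb_last : Sb (M - 1)%nat = (/ INR M) ^ p * zeta p.
Proof.
  unfold Sb. rewrite <- (is_series_unique _ _ a_series), <- Series_scal_l. apply Series_ext. intros n.
  unfold a. rewrite pow_inv, <- Rinv_mult, <- Rpow_mult_distr. f_equal. f_equal.
  rewrite <- mult_INR. f_equal. unfold M. lia.
Qed.

Lemma Sb_mid : Sb (m - 1)%nat = (/ INR m) ^ p * (1 - (/ 2) ^ p) * zeta p.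
Proof.
  destruct (interleave a (zeta p) 2 ltac:(lia) a_nonneg a_series) as [Hex Hsum].
  simpl in Hsum.
  assert (E : Series (fun n => a (n * 2 + 1)%nat) = (/ 2) ^ p * zeta p).
  { rewrite <- (is_series_unique _ _ a_series), <- Series_scal_l. apply Series_ext. intros n.
    unfold a. rewrite pow_inv, <- Rinv_mult, <- Rpow_mult_distr. f_equal. f_equal.
    replace 2 with (INR 2) by apply INR2. rewrite <- mult_INR. f_equal. lia. }
  assert (E2 : Sb (m - 1)%nat = (/ INR m) ^ p * Series (fun n => a (n * 2 + 0)%nat)).
  { unfold Sb. rewrite <- Series_scal_l. apply Series_ext. intros n.
    unfold a. rewrite pow_inv, <- Rinv_mult, <- Rpow_mult_distr. f_equal. f_equal.
    rewrite <- mult_INR. f_equal. unfold M. lia. }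
  rewrite E2. rewrite E in Hsum. replace (Series (fun n => a (n * 2 + 0)%nat)) with (zeta p - (/ 2) ^ p * zeta p) by lra.
  ring.
Qed.

Lemma split_M : fs Sb M = fs Sb (m - 1) + Sb (m - 1)%nat + fs (fun i => Sb (m + i)%nat) (m - 1) + Sb (M - 1)%nat.
Proof.
  replace M with ((m - 1) + (1 + ((m - 1) + 1)))%nat at 1 by (unfold M; lia).
  rewrite fs_add. rewrite fs_add. simpl. rewrite Nat.add_0_r. rewrite fs_add. simpl.
  replace (m - 1 + S (m - 1 + 0))%nat with (M - 1)%nat by (unfold M; lia).
  rewrite (fs_ext (fun i => Sb (m - 1 + S i)%nat) (fun i => Sb (m + i)%nat)). lra.
  intros i Hi; replace (m - 1 + S i)%nat with (m + i)%nat by lia; reflexivity.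
Qed.

Lemma lattice_sum :
  fs (fun i => G p (INR (1 + i) * PI / (2 * INR m))) (m - 1) =
  (2 / PI) ^ p * zeta p * (INR m ^ p - 1).
Proof.
  rewrite (fs_ext _ (fun i => (2 * INR m / PI) ^ p * (Sb i + Sb (M - i - 2)%nat))) by (intros; apply G_eq; auto).
  rewrite fs_scal, fs_plus.
  rewrite (fs_rev (fun i => Sb (M - i - 2)%nat)).
  rewrite (fs_ext (fun i => Sb (M - (m - 1 - 1 - i) - 2)%nat) (fun i => Sb (m + i)%nat)).
  2:{ intros i Hi; replace (M - (m - 1 - 1 - i) - 2)%nat with (m + i)%nat by (unfold M; lia); reflexivity. }
  destruct IL as [_ HIL]. rewrite split_M in HIL. rewrite Sb_mid, Sb_last in HIL.
  replace (fs Sb (m - 1) + fs (fun i => Sb (m + i)%nat) (m - 1)) with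
    (zeta p - (/ INR m) ^ p * (1 - (/ 2) ^ p) * zeta p - (/ INR M) ^ p * zeta p) by lra.
  unfold M. rewrite mult_INR, INR2.
  pose proof mpos. pose proof PI_RGT_0.
  unfold Rdiv. rewrite !Rinv_mult, !Rpow_mult_distr, !pow_inv.
  assert (INR m ^ p <> 0) by (apply pow_nonzero; lra).
  assert (2 ^ p <> 0) by (apply pow_nonzero; lra).
  assert (PI ^ p <> 0) by (apply pow_nonzero; lra).
  field. auto.
Qed.
End Lattice.

Lemma lattice s m : (1 <= s)%nat -> (1 <= m)%nat ->
  fs (fun i => G (2 * s) (INR (1 + i) * PI / (2 * INR m))) (m - 1) =
  (2 / PI) ^ (2 * s) * zeta (2 * s) * (INR m ^ (2 * s) - 1).
Proof. intros. apply lattice_sum; auto. Qed.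


Lemma sin_bounds t : 0 <= t <= PI -> t - t ^ 3 / 6 <= sin t <= t.
Proof.
  intros Ht. pose proof (sin_bound t 0 (proj1 Ht) (proj2 Ht)) as [H1 H2].
  unfold sin_approx, sin_term in H1, H2. simpl in H1, H2.
  pose proof PI_4. pose proof PI_RGT_0.
  split. lra.
  assert (t <= 4) by lra.
  assert (t ^ 2 <= 16) by nra.
  assert (0 <= t ^ 3) by (apply pow_le; lra).
  assert (t ^ 5 = t^3 * t^2) by ring.
  assert (t^3 * t^2 <= t^3 * 16) by (apply Rmult_le_compat_l; lra).
  simpl in *. nra.
Qed.

Lemma unif_finite (f : nat -> nat -> R) (g : nat -> R) :
  (forall r, Un_cv (fun j => f j r) (g r)) ->
  forall K eta, 0 < eta -> exists J, forall j r, (J <= j)%nat -> (r < K)%nat -> Rabs (f j r - g r) < eta.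
Proof.
  intros H K eta He. induction K.
  - exists O. intros; lia.
  - destruct IHK as [J1 HJ1]. destruct (H K eta He) as [J2 HJ2].
    exists (Nat.max J1 J2). intros j r Hj Hr.
    destruct (Nat.eq_dec r K). subst. apply HJ2. lia.
    apply HJ1; lia.
Qed.

Lemma fs_abs_le f n : Rabs (fs f n) <= fs (fun i => Rabs (f i)) n.
Proof. induction n; simpl. rewrite Rabs_R0; lra. eapply Rle_trans. apply Rabs_triang. lra. Qed.

Lemma tail_bound (g B : nat -> R) K :
  (forall r, Rabs (g r) <= B r) -> ex_series B ->
  Rabs (Series g - fs g K) <= Series B - fs B K.
Proof.
  intros Hg HB.
  assert (Hgex : ex_series g).
  { apply (@ex_series_le R_AbsRing R_CompleteNormedModule _ B); auto. }
  pose proof (proj1 (is_series_fs _ _) (Series_correct _ Hgex)) as Hg1.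
  pose proof (proj1 (is_series_fs _ _) (Series_correct _ HB)) as HB1.
  assert (L1 : is_lim_seq (fun n => Rabs (fs g (n + K) - fs g K)) (Rabs (Series g - fs g K))).
  { apply (is_lim_seq_abs _ (Series g - fs g K)). apply is_lim_seq_minus'.
    apply (is_lim_seq_incr_n (fun n => fs g n) K). auto. apply is_lim_seq_const. }
  assert (L2 : is_lim_seq (fun n => fs B (n + K) - fs B K) (Series B - fs B K)).
  { apply is_lim_seq_minus'. apply (is_lim_seq_incr_n (fun n => fs B n) K). auto. apply is_lim_seq_const. }
  assert (Rbar_le (Rabs (Series g - fs g K)) (Series B - fs B K)).
  { eapply is_lim_seq_le; [|exact L1|exact L2]. intros n. simpl.
    rewrite Nat.add_comm, !fs_add.
    replace (fs g K + fs (fun i => g (K + i)%nat) n - fs g K) with (fs (fun i => g (K + i)%nat) n) by ring.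
    replace (fs B K + fs (fun i => B (K + i)%nat) n - fs B K) with (fs (fun i => B (K + i)%nat) n) by ring.
    eapply Rle_trans. apply fs_abs_le. apply fs_le. intros; auto. }
  exact H.
Qed.

Lemma tannery (f : nat -> nat -> R) (g B : nat -> R) (N : nat -> nat) :
  (forall j r, (r < N j)%nat -> Rabs (f j r) <= B r) -> ex_series B ->
  (forall r, Un_cv (fun j => f j r) (g r)) ->
  (forall j, (j <= N j)%nat) ->
  Un_cv (fun j => fs (f j) (N j)) (Series g).
Proof.
  intros Hb HB Hc HN eps He.
  assert (HgB : forall r, Rabs (g r) <= B r).
  { intros r. assert (Hl : is_lim_seq (fun j => Rabs (f j r)) (Rabs (g r))).
    { apply (is_lim_seq_abs _ (g r)). apply is_lim_seq_Reals. apply Hc. }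
    assert (Rbar_le (Rabs (g r)) (B r)).
    { apply (is_lim_seq_le (fun j => Rabs (f (j + S r)%nat r)) (fun _ => B r)).
      intros j. apply Hb. pose proof (HN (j + S r)%nat). lia.
      apply (is_lim_seq_incr_n (fun j => Rabs (f j r)) (S r)). auto. apply is_lim_seq_const. }
    exact H. }
  pose proof (proj1 (is_series_fs _ _) (Series_correct _ HB)) as HB1.
  apply is_lim_seq_Reals in HB1. destruct (HB1 (eps / 3)) as [K HK]. lra.
  destruct (unif_finite f g Hc K (eps / (3 * INR (S K)))) as [J HJ].
  { apply Rdiv_lt_0_compat. lra. pose proof (INR_S_pos K). lra. }
  exists (Nat.max J K). intros j Hj. unfold R_dist.
  assert (T1 : Rabs (Series g - fs g K) <= Series B - fs B K) by (apply tail_bound; auto).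
  assert (T0 : Series B - fs B K < eps / 3).
  { specialize (HK K (le_n K)). unfold R_dist in HK. rewrite Rabs_minus_sym in HK.
    apply Rabs_lt_between in HK. lra. }
  assert (Hge : 0 <= Series B - fs B K).
  { assert (HBn : forall r, 0 <= B r) by (intros r; eapply Rle_trans; [apply Rabs_pos|apply HgB]).
    pose proof (series_ge_fs B _ K HBn (Series_correct _ HB)). lra. }
  assert (HNK : (K <= N j)%nat) by (pose proof (HN j); lia).
  replace (N j) with (K + (N j - K))%nat by lia. rewrite fs_add.
  assert (A1 : Rabs (fs (f j) K - fs g K) <= eps / 3).
  { rewrite <- fs_minus. eapply Rle_trans. apply fs_abs_le.
    eapply Rle_trans. apply (fs_le _ (fun _ => eps / (3 * INR (S K)))).
    intros r Hr. left. apply HJ; lia.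
    assert (E : forall c n, fs (fun _ => c) n = c * INR n).
    { intros c n; induction n. simpl; ring. change (fs (fun _ => c) (S n)) with (fs (fun _ => c) n + c). rewrite IHn, S_INR; ring. }
    rewrite E. rewrite S_INR. pose proof (pos_INR K).
    apply Rmult_le_reg_r with (3 * (INR K + 1)). lra.
    field_simplify; lra. }
  assert (A2 : Rabs (fs (fun i => f j (K + i)%nat) (N j - K)) <= Series B - fs B K).
  { eapply Rle_trans. apply fs_abs_le.
    eapply Rle_trans. apply (fs_le _ (fun i => B (K + i)%nat)). intros; apply Hb; lia.
    assert (HBn : forall r, 0 <= B r) by (intros r; eapply Rle_trans; [apply Rabs_pos|apply HgB]).
    pose proof (series_ge_fs B _ (K + (N j - K)) HBn (Series_correct _ HB)). rewrite fs_add in H. lra. }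
  replace (fs (f j) K + fs (fun i => f j (K + i)%nat) (N j - K) - Series g) with
    ((fs (f j) K - fs g K) + fs (fun i => f j (K + i)%nat) (N j - K) - (Series g - fs g K)) by ring.
  eapply Rle_lt_trans. apply Rabs_triang. rewrite Rabs_Ropp.
  eapply Rle_lt_trans. apply Rplus_le_compat_r. apply Rabs_triang.
  lra.
Qed.


Lemma inv_pow_abs_le z p d r : (2 <= p)%nat -> 0 < d -> d * INR (r + 1) <= Rabs z ->
  Rabs (/ z ^ p) <= / d ^ p * / INR (r + 1) ^ 2.
Proof.
  intros Hp Hd Hz.
  assert (H1 : 1 <= INR (r + 1)) by (rewrite plus_INR; simpl; pose proof (pos_INR r); lra).
  assert (Hz0 : 0 < Rabs z) by nra.
  rewrite Rabs_inv, <- RPow_abs.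
  assert (INR (r + 1) ^ 2 <= INR (r + 1) ^ p) by (apply Rle_pow; auto).
  assert ((d * INR (r + 1)) ^ p <= Rabs z ^ p) by (apply pow_incr; nra).
  rewrite Rpow_mult_distr in H0.
  assert (0 < d ^ p) by (apply pow_lt; lra).
  assert (0 < INR (r+1) ^ 2) by (apply pow_lt; lra).
  rewrite <- Rinv_mult. apply Rinv_le_contravar. apply Rmult_lt_0_compat; auto.
  eapply Rle_trans; [|exact H0]. apply Rmult_le_compat_l; lra.
Qed.

Lemma tG_bound p y r d : (2 <= p)%nat -> 0 < d -> d <= y -> y <= PI - d ->
  Rabs (tG p y r) <= 2 * / d ^ p * / INR (r + 1) ^ 2.
Proof.
  intros Hp Hd H1 H2. pose proof PI_RGT_0. unfold tG.
  eapply Rle_trans. apply Rabs_triang.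
  assert (HI : INR (r + 1) = INR r + 1) by (rewrite plus_INR; simpl; lra).
  pose proof (pos_INR r).
  assert (A : Rabs (/ (y + INR r * PI) ^ p) <= / d ^ p * / INR (r + 1) ^ 2).
  { apply inv_pow_abs_le; auto. rewrite Rabs_pos_eq by nra. rewrite HI. nra. }
  assert (B : Rabs (/ (y - INR (S r) * PI) ^ p) <= / d ^ p * / INR (r + 1) ^ 2).
  { apply inv_pow_abs_le; auto. rewrite S_INR. rewrite Rabs_left by nra. rewrite HI. nra. }
  lra.
Qed.

Lemma ex_series_bound C : ex_series (fun r => C * / INR (r + 1) ^ 2).
Proof. destruct (ex_series_invpow 2 ltac:(lia)) as [l Hl]. exists (C * l). exact (is_series_scal_l C _ l Hl). Qed.

Lemma ex_tG p y : (2 <= p)%nat -> 0 < y < PI -> ex_series (tG p y).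
Proof.
  intros Hp Hy. set (d := Rmin y (PI - y)).
  assert (0 < d) by (unfold d; apply Rmin_glb_lt; lra).
  apply (@ex_series_le R_AbsRing R_CompleteNormedModule _ (fun r => (2 * / d ^ p) * / INR (r + 1) ^ 2)).
  intros r. apply tG_bound; auto. apply Rmin_l. pose proof (Rmin_r y (PI - y)). fold d in H0. lra.
  apply ex_series_bound.
Qed.

Lemma doubling u : sin u <> 0 -> / sin u ^ 2 = / 4 * (/ sin (u / 2) ^ 2 + / sin ((u + PI) / 2) ^ 2).
Proof.
  intros H. replace ((u + PI) / 2) with (u / 2 + PI / 2) by field.
  rewrite sin_plus, sin_PI2, cos_PI2.
  replace u with (2 * (u / 2)) in H |- * at 1 by field. rewrite sin_2a in H |- *.
  assert (sin (u/2) <> 0) by (intro E; apply H; rewrite E; ring).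
  assert (cos (u/2) <> 0) by (intro E; apply H; rewrite E; ring).
  replace (sin (u / 2) * 0 + cos (u / 2) * 1) with (cos (u / 2)) by ring.
  assert (E : sin (u/2)^2 + cos (u/2)^2 = 1) by (rewrite <- (sin2_cos2 (u/2)); unfold Rsqr; ring).
  replace (/ (2 * sin (u/2) * cos (u/2)) ^ 2) with ((sin (u/2)^2 + cos (u/2)^2) / (2 * sin (u/2) * cos (u/2)) ^ 2)
    by (rewrite E; field; split; auto).
  field. split; auto.
Qed.

Lemma sin_pos_in t : 0 < t < PI -> sin t <> 0.
Proof. intros. apply Rgt_not_eq. apply sin_gt_0; lra. Qed.

Lemma pow2R_pos j : 0 < 2 ^ j. Proof. apply pow_lt; lra. Qed.

Lemma iter_doubling x j : 0 < x < PI ->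
  / sin x ^ 2 = (/ 4) ^ j * fs (fun r => / sin ((x + INR r * PI) / 2 ^ j) ^ 2) (2 ^ j).
Proof.
  intros Hx. pose proof PI_RGT_0. induction j.
  - simpl. replace ((x + 0 * PI) / 1) with x by field. ring.
  - rewrite IHj. rewrite (fs_ext _ (fun r => / 4 * (/ sin ((x + INR r * PI) / 2 ^ S j) ^ 2 +
                        / sin ((x + INR (2 ^ j + r) * PI) / 2 ^ S j) ^ 2))).
    + rewrite fs_scal, fs_plus.
      replace (2 ^ S j)%nat with (2 ^ j + 2 ^ j)%nat by (simpl; lia). rewrite fs_add.
      simpl. ring.
    + intros r Hr. rewrite doubling.
      * pose proof (pow2R_pos j). change (2 ^ S j) with (2 * 2 ^ j).
        replace ((x + INR r * PI) / 2 ^ j / 2) with ((x + INR r * PI) / (2 * 2 ^ j)) by (field; lra).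
        replace (((x + INR r * PI) / 2 ^ j + PI) / 2) with ((x + INR (2 ^ j + r) * PI) / (2 * 2 ^ j)).
        reflexivity. rewrite plus_INR, pow_INR, INR2. field. lra.
      * apply sin_pos_in. pose proof (pow2R_pos j). split.
        apply Rdiv_lt_0_compat; auto. pose proof (pos_INR r); nra.
        apply Rmult_lt_reg_r with (2 ^ j); auto. unfold Rdiv. rewrite Rmult_assoc, Rinv_l by lra.
        assert (INR r + 1 <= 2 ^ j). { rewrite <- S_INR. replace 2 with (INR 2) by (simpl; lra). rewrite <- pow_INR. apply le_INR. lia. }
        nra.
Qed.


Lemma ex_series_scalR c a : ex_series a -> ex_series (fun n => c * a n).
Proof. intros [l Hl]. exists (c * l). exact (is_series_scal_l c a l Hl). Qed.

Lemma PI_gt3 : 3 < PI. Proof. pose proof PI2_3_2. lra. Qed.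

Lemma sin_bounds_all t : 0 <= t -> t - t ^ 3 / 6 <= sin t <= t.
Proof.
  intros Ht. destruct (Rle_lt_dec t PI).
  - apply sin_bounds; lra.
  - pose proof PI_gt3. pose proof (SIN_bound t). split.
    + assert (t ^ 3 - 6 * t - 6 >= 0). { simpl. nra. } lra.
    + lra.
Qed.

Definition hL (j : nat) : R := 2 ^ S j.
Lemma hL_pos j : 0 < hL j. Proof. apply pow2R_pos. Qed.

Lemma lim_hsin y : 0 < y -> is_lim_seq (fun j => hL j * sin (y / hL j)) y.
Proof.
  intros Hy.
  apply (is_lim_seq_le_le (fun j => y - y ^ 3 / 6 * (/ 4) ^ S j) _ (fun _ => y)).
  - intros j. pose proof (hL_pos j). assert (0 <= y / hL j) by (apply Rdiv_le_0_compat; lra).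
    destruct (sin_bounds_all (y / hL j) H0). split.
    + replace ((/ 4) ^ S j) with (/ (hL j) ^ 2).
      2:{ unfold hL. rewrite <- pow_mult, pow_inv. f_equal. rewrite Nat.mul_comm, pow_mult. f_equal. lra. }
      apply Rmult_le_compat_l with (r := hL j) in H1; [|lra].
      eapply Rle_trans; [|exact H1]. right. field. lra.
    + apply Rmult_le_compat_l with (r := hL j) in H2; [|lra].
      eapply Rle_trans; [exact H2|]. right. field. lra.
  - replace (Finite y) with (Rbar_minus y (y ^ 3 / 6 * 0)) by (simpl; f_equal; ring).
    assert (Hg : is_lim_seq (fun j => (/ 4) ^ S j) 0).
    { apply (is_lim_seq_incr_1 (fun n => (/ 4) ^ n)). apply is_lim_seq_geom.
      rewrite Rabs_pos_eq; lra. }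
    pose proof (is_lim_seq_scal_l _ (y ^ 3 / 6) 0 Hg) as H. simpl in H.
    apply is_lim_seq_minus'. apply is_lim_seq_const. exact H.
  - apply is_lim_seq_const.
Qed.

Lemma lim_inv_hsin y : 0 < y -> Un_cv (fun j => / (hL j * sin (y / hL j)) ^ 2) (/ y ^ 2).
Proof.
  intros Hy. apply is_lim_seq_Reals.
  replace (Finite (/ y ^ 2)) with (Rbar_inv (y * (y * 1))) by (simpl; f_equal; field; lra).
  apply is_lim_seq_inv.
  2:{ intro E. injection E. intro. nra. }
  simpl. apply (is_lim_seq_mult' _ _ y (y * 1)). apply lim_hsin; auto.
  apply (is_lim_seq_mult' _ _ y 1). apply lim_hsin; auto. apply is_lim_seq_const.
Qed.

Lemma hsin_bound y L : 0 < L -> 0 < y -> y <= L * (PI / 2) -> 0 <= / (L * sin (y / L)) ^ 2 <= 9 * / y ^ 2.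
Proof.
  intros HL Hy Hyl. set (t := y / L).
  assert (Ht : 0 < t <= PI / 2). { unfold t. split. apply Rdiv_lt_0_compat; lra.
    apply Rmult_le_reg_r with L; auto. unfold Rdiv. rewrite Rmult_assoc, Rinv_l by lra. lra. }
  pose proof PI2_3_2. pose proof PI_4.
  destruct (sin_bounds t ltac:(lra)) as [H1 _].
  assert (t ^ 2 <= 4) by (simpl; nra).
  assert (sin t >= t / 3) by (simpl in *; nra).
  assert (L * sin t >= y / 3). { unfold t in *. replace (y / 3) with (L * (y / L / 3)) by (field; lra). nra. }
  split. apply Rlt_le, Rinv_0_lt_compat, pow_lt. lra.
  replace (9 * / y ^ 2) with (/ (y / 3) ^ 2) by (field; lra).
  apply Rinv_le_contravar. apply pow_lt; lra. apply pow_incr; lra.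
Qed.

Lemma pow2_ge j : (j <= 2 ^ j)%nat.
Proof. pose proof (Nat.pow_gt_lin_r 2 j). lia. Qed.

Lemma csc2_form x j : 0 < x < PI ->
  / sin x ^ 2 = fs (fun r => / (hL j * sin ((x + INR r * PI) / hL j)) ^ 2 +
                             / (hL j * sin ((INR (S r) * PI - x) / hL j)) ^ 2) (2 ^ j).
Proof.
  intros Hx. rewrite (iter_doubling x (S j) Hx). fold (hL j).
  replace (2 ^ S j)%nat with (2 ^ j + 2 ^ j)%nat by (simpl; lia). rewrite fs_add.
  rewrite (fs_rev (fun i => / sin ((x + INR (2 ^ j + i) * PI) / hL j) ^ 2)).
  rewrite Rmult_plus_distr_l, <- !fs_scal, <- fs_plus.
  apply fs_ext. intros r Hr.
  assert (E : (/ 4) ^ S j = / hL j ^ 2).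
  { unfold hL. rewrite <- pow_mult, pow_inv. f_equal. rewrite Nat.mul_comm, pow_mult. f_equal. lra. }
  rewrite E, !Rpow_mult_distr, !Rinv_mult. f_equal. f_equal. f_equal. f_equal.
  replace ((x + INR (2 ^ j + (2 ^ j - 1 - r)) * PI) / hL j) with (PI - (INR (S r) * PI - x) / hL j).
  apply sin_PI_x.
  assert (HI : INR (2 ^ j + (2 ^ j - 1 - r)) = hL j - 1 - INR r).
  { assert (H2 : (2 ^ j + (2 ^ j - 1 - r) + 1 + r = 2 ^ j + 2 ^ j)%nat) by lia.
    apply (f_equal INR) in H2. rewrite !plus_INR, !pow_INR, INR2, INR_1 in H2.
    rewrite plus_INR, pow_INR, INR2. unfold hL. simpl. lra. }
  rewrite HI, S_INR. pose proof (hL_pos j). field. lra.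
Qed.

Lemma csc2_G x : 0 < x < PI -> / sin x ^ 2 = G 2 x.
Proof.
  intros Hx. pose proof PI_RGT_0.
  set (f := fun j r => / (hL j * sin ((x + INR r * PI) / hL j)) ^ 2 +
                       / (hL j * sin ((INR (S r) * PI - x) / hL j)) ^ 2).
  assert (HT : Un_cv (fun j => fs (f j) (2 ^ j)) (Series (tG 2 x))).
  { apply (tannery f (tG 2 x) (fun r => 9 * tG 2 x r) (fun j => 2 ^ j)%nat).
    - intros j r Hr. unfold f, tG.
      assert (Hr' : INR r + 1 <= 2 ^ j).
      { rewrite <- S_INR. replace 2 with (INR 2) by apply INR2. rewrite <- pow_INR. apply le_INR. lia. }
      assert (HLj : hL j = 2 * 2 ^ j) by reflexivity.
      pose proof (pos_INR r).
      destruct (hsin_bound (x + INR r * PI) (hL j)) as [A1 A2]. apply hL_pos. nra. rewrite HLj. nra.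
      destruct (hsin_bound (INR (S r) * PI - x) (hL j)) as [B1 B2]. apply hL_pos. rewrite S_INR; nra. rewrite HLj, S_INR. nra.
      replace ((x - INR (S r) * PI) ^ 2) with ((INR (S r) * PI - x) ^ 2) by ring.
      rewrite Rabs_pos_eq by lra. lra.
    - apply ex_series_scalR. apply ex_tG; auto.
    - intros r. unfold f, tG. apply is_lim_seq_Reals.
      replace ((x - INR (S r) * PI) ^ 2) with ((INR (S r) * PI - x) ^ 2) by ring.
      apply is_lim_seq_plus'; apply is_lim_seq_Reals; apply lim_inv_hsin.
      pose proof (pos_INR r). nra. rewrite S_INR. pose proof (pos_INR r). nra.
    - intros; apply pow2_ge. }
  assert (HC : Un_cv (fun j => fs (f j) (2 ^ j)) (/ sin x ^ 2)).
  { intros eps He. exists O. intros j _. unfold f. rewrite <- csc2_form by auto.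
    unfold R_dist. rewrite Rminus_diag, Rabs_R0. auto. }
  unfold G. exact (UL_sequence _ _ _ HC HT).
Qed.


Lemma deriv_invpow c p y : y - c <> 0 ->
  is_derive (fun y => / (y - c) ^ p) y (- INR p * / (y - c) ^ (S p)).
Proof.
  intros H. auto_derive.
  - apply pow_nonzero; auto.
  - destruct p. simpl. field. auto.
    cbn [Init.Nat.pred]. replace (y + - c) with (y - c) by ring.
    assert ((y - c) ^ p <> 0) by (apply pow_nonzero; auto).
    simpl pow. field. split; auto.
Qed.

Lemma deriv_tG p r y : 0 < y < PI ->
  is_derive (fun y => tG p y r) y (- INR p * tG (S p) y r).
Proof.
  intros Hy. pose proof (pos_INR r). unfold tG.
  replace (- INR p * (/ (y + INR r * PI) ^ S p + / (y - INR (S r) * PI) ^ S p)) with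
    (plus (- INR p * / (y - (- (INR r * PI))) ^ S p) (- INR p * / (y - INR (S r) * PI) ^ S p)).
  2:{ unfold plus; simpl. replace (y - - (INR r * PI)) with (y + INR r * PI) by ring. ring. }
  apply (is_derive_ext (fun y => plus (/ (y - (- (INR r * PI))) ^ p) (/ (y - INR (S r) * PI) ^ p))).
  { intros t. unfold plus; simpl. replace (t - - (INR r * PI)) with (t + INR r * PI) by ring. reflexivity. }
  apply (is_derive_plus (K:=R_AbsRing) (V:=R_NormedModule)); apply deriv_invpow.
  - pose proof PI_RGT_0. nra.
  - rewrite S_INR. pose proof PI_RGT_0. nra.
Qed.

Lemma deriv_fs_tG p n y : 0 < y < PI ->
  is_derive (fun y => fs (tG p y) n) y (fs (fun r => - INR p * tG (S p) y r) n).
Proof.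
  intros Hy. induction n.
  - simpl. apply (is_derive_const (V := R_NormedModule) 0).
  - simpl. apply (is_derive_plus (K:=R_AbsRing) (V:=R_NormedModule) (fun y => fs (tG p y) n) (fun y => tG p y n)); auto.
    apply deriv_tG; auto.
Qed.

Lemma G_deriv p x : (2 <= p)%nat -> 0 < x < PI ->
  is_derive (G p) x (- INR p * G (S p) x).
Proof.
  intros Hp Hx. pose proof PI_RGT_0.
  set (d0 := Rmin x (PI - x) / 2).
  assert (Hd0 : 0 < d0) by (unfold d0; apply Rdiv_lt_0_compat; [apply Rmin_glb_lt|]; lra).
  assert (Hd1 : d0 <= x / 2) by (unfold d0; pose proof (Rmin_l x (PI - x)); lra).
  assert (Hd2 : d0 <= (PI - x) / 2) by (unfold d0; pose proof (Rmin_r x (PI - x)); lra).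
  set (d := mkposreal d0 Hd0).
  assert (HB : forall y, Boule x d y -> d0 <= y /\ y <= PI - d0).
  { intros y Hy. unfold Boule in Hy. simpl in Hy. apply Rabs_def2 in Hy. lra. }
  assert (HB' : forall y, Boule x d y -> 0 < y < PI).
  { intros y Hy. destruct (HB y Hy). lra. }
  apply is_derive_Reals.
  apply (CVU_derivable (fun n y => fs (tG p y) n) (fun n y => fs (fun r => - INR p * tG (S p) y r) n)
           (G p) (fun y => - INR p * G (S p) y) x d).
  - intros eps He.
    set (Bc := INR p * (2 * / d0 ^ S p)).
    set (B := fun r => Bc * / INR (r + 1) ^ 2).
    assert (HBex : ex_series B) by apply ex_series_bound.
    pose proof (proj1 (is_series_fs _ _) (Series_correct _ HBex)) as HB1.
    apply is_lim_seq_Reals in HB1. destruct (HB1 eps He) as [N HN].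
    exists N. intros n y Hn Hy. destruct (HB y Hy) as [Hy1 Hy2].
    assert (Hg : forall r, Rabs (- INR p * tG (S p) y r) <= B r).
    { intros r. unfold B, Bc. rewrite Rabs_mult, Rabs_Ropp, Rabs_pos_eq by apply pos_INR.
      rewrite Rmult_assoc. apply Rmult_le_compat_l. apply pos_INR. apply tG_bound; auto. }
    pose proof (tail_bound _ _ n Hg HBex) as T.
    unfold G. rewrite <- Series_scal_l.
    eapply Rle_lt_trans. exact T.
    specialize (HN n Hn). unfold R_dist in HN. rewrite Rabs_minus_sym in HN.
    apply Rabs_lt_between in HN. lra.
  - intros y Hy. apply is_lim_seq_Reals. apply is_series_fs. apply Series_correct. apply ex_tG; auto.
  - intros n y Hy. apply is_derive_Reals. apply deriv_fs_tG; auto.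
  - unfold Boule. simpl. rewrite Rminus_diag, Rabs_R0. auto.
Qed.


Definition Phi (k : nat) (y : R) : R := / sin y ^ (2 * k).
Definition Phi1 (k : nat) (y : R) : R := - (2 * INR k) * cos y * / sin y ^ (2 * k + 1).

Lemma invsinpow_deriv q y : 0 < y < PI ->
  is_derive (fun y => / sin y ^ q) y (- INR q * cos y * / sin y ^ (S q)).
Proof.
  intros Hy. assert (Hs : sin y <> 0) by (apply sin_pos_in; auto).
  auto_derive.
  - apply pow_nonzero; auto.
  - destruct q.
    + simpl. field. auto.
    + cbn [Init.Nat.pred]. assert (sin y ^ q <> 0) by (apply pow_nonzero; auto).
      simpl pow. field. split; auto.
Qed.

Lemma cossin_deriv q y : 0 < y < PI ->
  is_derive (fun y => cos y * / sin y ^ q) y (- / sin y ^ q * sin y - INR q * cos y ^ 2 * / sin y ^ (S q)).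
Proof.
  intros Hy. assert (Hs : sin y <> 0) by (apply sin_pos_in; auto).
  auto_derive.
  - apply pow_nonzero; auto.
  - destruct q.
    + simpl. field. auto.
    + cbn [Init.Nat.pred]. assert (sin y ^ q <> 0) by (apply pow_nonzero; auto).
      simpl pow. field. split; auto.
Qed.

Lemma Phi_deriv k y : 0 < y < PI -> is_derive (Phi k) y (Phi1 k y).
Proof.
  intros Hy. unfold Phi, Phi1.
  replace (- (2 * INR k) * cos y * / sin y ^ (2 * k + 1)) with (- INR (2 * k) * cos y * / sin y ^ S (2 * k)).
  apply invsinpow_deriv; auto.
  rewrite mult_INR, INR2. replace (S (2 * k)) with (2 * k + 1)%nat by lia. reflexivity.
Qed.

Lemma Phi1_deriv k y : 0 < y < PI ->
  is_derive (Phi1 k) y (2 * INR k * (2 * INR k + 1) * Phi (S k) y - 4 * INR k ^ 2 * Phi k y).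
Proof.
  intros Hy. assert (Hs : sin y <> 0) by (apply sin_pos_in; auto).
  assert (E : cos y ^ 2 = 1 - sin y ^ 2) by (rewrite <- (sin2_cos2 y); unfold Rsqr; ring).
  unfold Phi1.
  apply (is_derive_ext (fun y => - (2 * INR k) * (cos y * / sin y ^ (2 * k + 1)))).
  { intros t. exact (eq_sym (Rmult_assoc _ _ _)). }
  replace (2 * INR k * (2 * INR k + 1) * Phi (S k) y - 4 * INR k ^ 2 * Phi k y) with
    (- (2 * INR k) * (- / sin y ^ (2 * k + 1) * sin y - INR (2 * k + 1) * cos y ^ 2 * / sin y ^ (S (2 * k + 1)))).
  apply is_derive_scal. apply cossin_deriv; auto.
  unfold Phi. rewrite E. rewrite plus_INR, mult_INR, INR2, INR_1.
  replace (2 * S k)%nat with (S (S (2 * k))) by lia.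
  replace (S (2 * k + 1)) with (S (S (2 * k))) by lia.
  replace (2 * k + 1)%nat with (S (2 * k)) by lia.
  assert (sin y ^ (2 * k) <> 0) by (apply pow_nonzero; auto).
  simpl pow. field. split; auto.
Qed.

Lemma fs_deriv (F F' : nat -> R -> R) n y :
  (forall j, (j < n)%nat -> is_derive (F j) y (F' j y)) ->
  is_derive (fun y => fs (fun j => F j y) n) y (fs (fun j => F' j y) n).
Proof.
  induction n; intros H.
  - simpl. apply (is_derive_const (V := R_NormedModule) 0).
  - simpl. apply (is_derive_plus (K:=R_AbsRing) (V:=R_NormedModule) (fun y => fs (fun j => F j y) n) (fun y => F n y)).
    apply IHn; intros; apply H; lia. apply H; lia.
Qed.

Lemma deriv_unique_open (f g : R -> R) (f' g' y : R) : 0 < y < PI ->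
  (forall t, 0 < t < PI -> f t = g t) ->
  is_derive f y f' -> is_derive g y g' -> f' = g'.
Proof.
  intros Hy Heq Hf Hg.
  assert (Hg' : is_derive g y f').
  { apply (is_derive_ext_loc f g y f'); auto.
    assert (Hd : 0 < Rmin y (PI - y)) by (apply Rmin_glb_lt; lra).
    exists (mkposreal _ Hd). intros t Ht. apply Heq.
    change (Rabs (t - y) < Rmin y (PI - y)) in Ht. apply Rabs_def2 in Ht.
    pose proof (Rmin_l y (PI - y)). pose proof (Rmin_r y (PI - y)). lra. }
  apply is_derive_unique in Hg. apply is_derive_unique in Hg'. congruence.
Qed.


Lemma esym_0 l : esym l 0 = 1.
Proof. destruct l; reflexivity. Qed.

Lemma esym_app l x n : esym (l ++ [x]) (S n) = esym l (S n) + x * esym l n.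
Proof.
  revert n. induction l as [|y l IH]; intros n.
  - simpl. destruct n; simpl; ring.
  - simpl. rewrite IH. destruct n.
    + rewrite !esym_0. ring.
    + rewrite IH. ring.
Qed.

Lemma esym_big l n : (length l < n)%nat -> esym l n = 0.
Proof.
  revert n. induction l as [|y l IH]; intros n H.
  - destruct n; [simpl in H; lia| reflexivity].
  - destruct n; [simpl in H; lia|]. simpl in H. simpl.
    rewrite IH by lia. rewrite IH by lia. ring.
Qed.

Lemma s_sym_0 v : s_sym v 0 = 1.
Proof. apply esym_0. Qed.

Lemma s_sym_rec k j : (1 <= k)%nat -> s_sym (S k) (S j) = s_sym k (S j) + INR k ^ 2 * s_sym k j.
Proof.
  intros Hk. unfold s_sym. replace (S k - 1)%nat with (S (k - 1)) by lia.
  rewrite seq_S, map_app.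
  replace (1 + (k - 1))%nat with k by lia.
  exact (esym_app (map (fun i => INR i ^ 2) (seq 1 (k - 1))) (INR k ^ 2) j).
Qed.

Lemma s_sym_kk k : (1 <= k)%nat -> s_sym k k = 0.
Proof. intros. unfold s_sym. apply esym_big. rewrite length_map, length_seq. lia. Qed.

Definition beta (v j : nat) : R :=
  4 ^ j * s_sym v j * INR (fact (2 * v - 2 * j - 1)) / INR (fact (2 * v - 1)).

Lemma INR_fact_SS n : INR (fact (S (S n))) = INR (S (S n)) * INR (S n) * INR (fact n).
Proof. change (fact (S (S n))) with (S (S n) * (S n * fact n))%nat. rewrite !mult_INR. ring. Qed.

Lemma fact_pos' n : 0 < INR (fact n).
Proof. apply lt_0_INR. apply lt_O_fact. Qed.

Lemma beta_rec k j : (1 <= k)%nat -> (j <= k)%nat ->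
  beta (S k) j * (2 * INR k * (2 * INR k + 1)) =
  beta k j * (INR (2 * (k - j)) * INR (S (2 * (k - j)))) +
  match j with O => 0 | S j' => 4 * INR k ^ 2 * beta k j' end.
Proof.
  intros Hk Hj. unfold beta.
  replace (2 * S k - 1)%nat with (S (S (2 * k - 1))) by lia.
  rewrite INR_fact_SS.
  assert (E1 : INR (S (S (2 * k - 1))) = 2 * INR k + 1).
  { replace (S (S (2 * k - 1))) with (2 * k + 1)%nat by lia. rewrite plus_INR, mult_INR, INR2, INR_1. ring. }
  assert (E2 : INR (S (2 * k - 1)) = 2 * INR k).
  { replace (S (2 * k - 1)) with (2 * k)%nat by lia. rewrite mult_INR, INR2. ring. }
  rewrite E1, E2.
  pose proof (fact_pos' (2 * k - 1)).
  assert (Hk0 : 0 < INR k) by (apply lt_0_INR; lia).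
  destruct (Nat.eq_dec j k) as [->|Hne].
  - replace (2 * (k - k))%nat with O by lia. simpl INR at 3. destruct k; [lia|].
    rewrite s_sym_rec by lia. rewrite s_sym_kk by lia.
    replace (2 * S (S k) - 2 * S k - 1)%nat with 1%nat by lia.
    replace (2 * S k - 2 * k - 1)%nat with 1%nat by lia.
    simpl pow. pose proof (INR_S_pos k). field. repeat split; lra.
  - replace (2 * S k - 2 * j - 1)%nat with (S (S (2 * k - 2 * j - 1))) by lia.
    rewrite INR_fact_SS.
    replace (INR (S (S (2 * k - 2 * j - 1)))) with (INR (S (2 * (k - j))))
      by (f_equal; lia).
    replace (INR (S (2 * k - 2 * j - 1))) with (INR (2 * (k - j))) by (f_equal; lia).
    destruct j.
    + rewrite !s_sym_0. field. repeat split; lra.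
    + rewrite s_sym_rec by lia.
      replace (2 * k - 2 * j - 1)%nat with (S (S (2 * k - 2 * S j - 1))) by lia.
      rewrite INR_fact_SS.
      replace (INR (S (S (2 * k - 2 * S j - 1)))) with (INR (S (2 * (k - S j))))
        by (f_equal; lia).
      replace (INR (S (2 * k - 2 * S j - 1))) with (INR (2 * (k - S j))) by (f_equal; lia).
      simpl pow. field. repeat split; lra.
Qed.


Definition Rsum (k : nat) (y : R) : R := fs (fun j => beta k j * G (2 * (k - j)) y) k.
Definition Rsum1 (k : nat) (y : R) : R :=
  fs (fun j => beta k j * (- INR (2 * (k - j)) * G (S (2 * (k - j))) y)) k.
Definition Rsum2 (k : nat) (y : R) : R :=
  fs (fun j => beta k j * (- INR (2 * (k - j)) * (- INR (S (2 * (k - j))) * G (S (S (2 * (k - j)))) y))) k.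

Lemma Rsum_deriv k y : 0 < y < PI -> is_derive (Rsum k) y (Rsum1 k y).
Proof.
  intros Hy. unfold Rsum, Rsum1.
  apply (fs_deriv (fun j y => beta k j * G (2 * (k - j)) y)
                  (fun j y => beta k j * (- INR (2 * (k - j)) * G (S (2 * (k - j))) y))).
  intros j Hj. apply is_derive_scal. apply G_deriv; auto. lia.
Qed.

Lemma Rsum1_deriv k y : 0 < y < PI -> is_derive (Rsum1 k) y (Rsum2 k y).
Proof.
  intros Hy. unfold Rsum1, Rsum2.
  apply (fs_deriv (fun j y => beta k j * (- INR (2 * (k - j)) * G (S (2 * (k - j))) y))
                  (fun j y => beta k j * (- INR (2 * (k - j)) * (- INR (S (2 * (k - j))) * G (S (S (2 * (k - j)))) y)))).
  intros j Hj. apply is_derive_scal. apply is_derive_scal. apply G_deriv; auto. lia.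
Qed.

Lemma Phi_expand k : (1 <= k)%nat -> forall y, 0 < y < PI -> Phi k y = Rsum k y.
Proof.
  induction k as [|k IH]; intros Hk y Hy; [lia|].
  destruct (Nat.eq_dec k 0) as [->|Hk0].
  - unfold Phi, Rsum, beta. simpl fs. rewrite s_sym_0. simpl. rewrite <- csc2_G by auto.
    simpl pow. field. apply sin_pos_in; auto.
  - assert (Hk1 : (1 <= k)%nat) by lia.
    specialize (IH Hk1).
    assert (D1 : forall t, 0 < t < PI -> Phi1 k t = Rsum1 k t).
    { intros t Ht. apply (deriv_unique_open (Phi k) (Rsum k) _ _ t Ht IH).
      apply Phi_deriv; auto. apply Rsum_deriv; auto. }
    assert (D2 : 2 * INR k * (2 * INR k + 1) * Phi (S k) y - 4 * INR k ^ 2 * Phi k y = Rsum2 k y).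
    { apply (deriv_unique_open (Phi1 k) (Rsum1 k) _ _ y Hy D1).
      apply Phi1_deriv; auto. apply Rsum1_deriv; auto. }
    rewrite IH in D2 by auto.
    assert (Hkpos : 0 < INR k) by (apply lt_0_INR; lia).
    assert (HC : 2 * INR k * (2 * INR k + 1) <> 0) by (apply Rgt_not_eq; nra).
    apply (Rmult_eq_reg_r (2 * INR k * (2 * INR k + 1))); auto.
    replace (Phi (S k) y * (2 * INR k * (2 * INR k + 1))) with (Rsum2 k y + 4 * INR k ^ 2 * Rsum k y) by lra.
    unfold Rsum at 2. rewrite (Rmult_comm (fs _ (S k))), <- fs_scal.
    rewrite (fs_ext _ (fun j => (beta k j * (INR (2 * (k - j)) * INR (S (2 * (k - j))))) * G (2 * (S k - j)) y +
                               ((match j with O => 0 | S j' => 4 * INR k ^ 2 * beta k j' end) * G (2 * (S k - j)) y))).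
    2:{ intros j Hj. rewrite <- Rmult_plus_distr_r, <- beta_rec by lia. ring. }
    rewrite fs_plus.
    assert (EA : fs (fun j => (beta k j * (INR (2 * (k - j)) * INR (S (2 * (k - j))))) * G (2 * (S k - j)) y) (S k)
                 = Rsum2 k y).
    { change (fs (fun j => (beta k j * (INR (2 * (k - j)) * INR (S (2 * (k - j))))) * G (2 * (S k - j)) y) k
              + (beta k k * (INR (2 * (k - k)) * INR (S (2 * (k - k))))) * G (2 * (S k - k)) y = Rsum2 k y).
      assert (Z : INR (2 * (k - k)) = 0) by (replace (2 * (k - k))%nat with O by lia; reflexivity).
      rewrite Z, Rmult_0_l, Rmult_0_r, Rmult_0_l, Rplus_0_r.
      unfold Rsum2. apply fs_ext. intros j Hj.
      replace (2 * (S k - j))%nat with (S (S (2 * (k - j)))) by lia. ring. }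
    assert (EB : fs (fun j => (match j with O => 0 | S j' => 4 * INR k ^ 2 * beta k j' end) * G (2 * (S k - j)) y) (S k)
                 = 4 * INR k ^ 2 * Rsum k y).
    { rewrite fs_shift. rewrite Rmult_0_l, Rplus_0_l. unfold Rsum. rewrite <- fs_scal. apply fs_ext. intros j Hj.
      replace (2 * (S k - S j))%nat with (2 * (k - j))%nat by lia. ring. }
    rewrite EA, EB. reflexivity.
Qed.


Lemma geo_sum x n : (x - 1) * fs (fun i => x ^ i) n = x ^ n - 1.
Proof. induction n. simpl; ring. change (fs (fun i => x ^ i) (S n)) with (fs (fun i => x ^ i) n + x ^ n).
  rewrite Rmult_plus_distr_l, IHn. simpl. ring. Qed.

Lemma pow_alg M a j : M <> 0 ->
  (PI / (2 * M)) ^ (2 * (a + j)) * (2 / PI) ^ (2 * a) =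
  / (2 * M ^ 2) ^ (a + j) * (2 ^ (a + j) * (/ 4) ^ j * PI ^ (2 * j)).
Proof.
  intros HM. pose proof PI_RGT_0.
  rewrite !pow_mult.
  replace ((PI / (2 * M)) ^ 2) with (PI ^ 2 * / 4 * / M ^ 2) by (field; auto).
  replace ((2 / PI) ^ 2) with (4 * / PI ^ 2) by (field; lra).
  rewrite !Rpow_mult_distr, !pow_inv, !pow_add.
  replace 4 with (2 ^ 2) by ring. rewrite <- !pow_mult.
  replace (2 * a)%nat with (a + a)%nat by lia. replace (2 * j)%nat with (j + j)%nat by lia.
  rewrite !pow_add.
  assert (PI ^ a <> 0) by (apply pow_nonzero; lra).
  assert (PI ^ j <> 0) by (apply pow_nonzero; lra).
  assert (2 ^ a <> 0) by (apply pow_nonzero; lra).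
  assert (2 ^ j <> 0) by (apply pow_nonzero; lra).
  assert ((M ^ 2) ^ a <> 0) by (apply pow_nonzero; apply pow_nonzero; auto).
  assert ((M ^ 2) ^ j <> 0) by (apply pow_nonzero; apply pow_nonzero; auto).
  assert (M ^ a <> 0) by (apply pow_nonzero; auto). assert (M ^ j <> 0) by (apply pow_nonzero; auto).
  field. repeat split; auto.
Qed.

Lemma fs_head f n : (1 <= n)%nat -> fs f n = f O + fs (fun i => f (S i)) (n - 1).
Proof. intros. replace n with (S (n - 1)) at 1 by lia. apply fs_shift. Qed.

Definition gam (v j : nat) : R := beta v j * (2 ^ v * (/ 4) ^ j * PI ^ (2 * j)) * zeta (2 * (v - j)).
Definition cc (v i : nat) : R := fs (fun j => gam v j) (v - i).

Lemma beta_0 v : (1 <= v)%nat -> beta v 0 = 1.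
Proof. intros. unfold beta. rewrite s_sym_0. replace (2 * v - 2 * 0 - 1)%nat with (2 * v - 1)%nat by lia.
  pose proof (fact_pos' (2 * v - 1)). rewrite pow_O. field. lra. Qed.

Lemma GF_S_expand m v : (1 <= v)%nat -> (1 <= m)%nat ->
  GF_S m v = fs (fun j => (PI / (2 * INR m)) ^ (2 * v) * beta v j *
                           ((2 / PI) ^ (2 * (v - j)) * zeta (2 * (v - j)) * (INR m ^ (2 * (v - j)) - 1))) v.
Proof.
  intros Hv Hm. unfold GF_S. rewrite lsum_seq.
  pose proof PI_RGT_0. assert (Hm0 : 0 < INR m) by (apply lt_0_INR; lia).
  rewrite (fs_ext _ (fun i => Rsum v (INR (1 + i) * PI / (2 * INR m)))).
  2:{ intros i Hi. rewrite <- Phi_expand; [reflexivity | auto |].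
      assert (INR (1 + i) <= INR m) by (apply le_INR; lia).
      assert (0 < INR (1 + i)) by (apply lt_0_INR; lia).
      split. apply Rdiv_lt_0_compat; nra.
      apply Rmult_lt_reg_r with (2 * INR m). lra. unfold Rdiv. rewrite Rmult_assoc, Rinv_l by lra. nra. }
  unfold Rsum. rewrite fs_swap. rewrite <- fs_scal. apply fs_ext. intros j Hj.
  rewrite fs_scal. rewrite lattice by lia. ring.
Qed.

Lemma poly_identity c_ v x :
  (x - 1) * poly_eval (fun i => fs c_ (v - i)) v x = fs (fun j => c_ j * (x ^ (v - j) - 1)) v.
Proof.
  unfold poly_eval. rewrite lsum_seq. simpl.
  rewrite (fs_ext _ (fun i => fs (fun j => c_ j * x ^ i) (v - i))).
  2:{ intros i Hi. rewrite Rmult_comm, <- fs_scal. apply fs_ext. intros; ring. }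
  rewrite fs_tri. rewrite <- fs_scal. apply fs_ext. intros j Hj.
  rewrite (fs_scal (c_ j) (fun i => x ^ i)). rewrite <- geo_sum. ring.
Qed.

Theorem mainTheorem4 :
  forall v : nat, (1 <= v)%nat ->
  exists c : nat -> R,
    c (v - 1)%nat <> 0 /\
    (forall m : nat, (1 <= m)%nat ->
       GF_S m v =
       / (2 * INR m ^ 2) ^ v * (INR m ^ 2 - 1) * poly_eval c v (INR m ^ 2)) /\
    c (v - 1)%nat = 2 ^ v * zeta (2 * v) /\
    poly_eval c v 0 =
      2 ^ v / INR (fact (2 * v - 1)) *
      lsum (fun j => PI ^ (2 * j) * s_sym v j
                     * INR (fact (2 * v - 2 * j - 1)) * zeta (2 * v - 2 * j))
           (seq 0 v).
Proof.
  intros v Hv. pose proof PI_RGT_0.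
  assert (Hlead : cc v (v - 1) = 2 ^ v * zeta (2 * v)).
  { unfold cc. replace (v - (v - 1))%nat with 1%nat by lia. simpl. unfold gam.
    rewrite beta_0 by auto. replace (2 * (v - 0))%nat with (2 * v)%nat by lia. simpl. ring. }
  exists (cc v). split; [|split; [|split]].
  - rewrite Hlead. apply Rgt_not_eq. apply Rmult_lt_0_compat. apply pow_lt; lra. apply zeta_pos. lia.
  - intros m Hm. assert (Hm0 : 0 < INR m) by (apply lt_0_INR; lia).
    rewrite Rmult_assoc. unfold cc. rewrite poly_identity.
    rewrite GF_S_expand by auto. rewrite <- fs_scal. apply fs_ext. intros j Hj.
    unfold gam.
    pose proof (pow_alg (INR m) (v - j) j ltac:(lra)) as E.
    replace (v - j + j)%nat with v in E by lia.
    rewrite (pow_mult (INR m) 2 (v - j)).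
    transitivity (((PI / (2 * INR m)) ^ (2 * v) * (2 / PI) ^ (2 * (v - j))) * beta v j *
                  zeta (2 * (v - j)) * ((INR m ^ 2) ^ (v - j) - 1)).
    ring. rewrite E. ring.
  - exact Hlead.
  - unfold poly_eval. rewrite !lsum_seq. rewrite (fs_head _ v Hv). simpl Nat.add.
    rewrite (fs_ext (fun i => cc v (S i) * 0 ^ S i) (fun _ => 0)) by (intros; simpl; ring).
    rewrite fs_zero, pow_O, Rmult_1_r, Rplus_0_r.
    unfold cc. rewrite Nat.sub_0_r. unfold Rdiv. rewrite Rmult_assoc, <- fs_scal, <- fs_scal.
    apply fs_ext. intros j Hj. simpl Nat.add. unfold gam, beta.
    replace (2 * (v - j))%nat with (2 * v - 2 * j)%nat by lia.
    pose proof (fact_pos' (2 * v - 1)).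
    replace (4 ^ j) with (/ (/ 4) ^ j) by (rewrite pow_inv, Rinv_inv; reflexivity).
    assert ((/ 4) ^ j <> 0) by (apply pow_nonzero; lra).
    field. split; lra.
Qed.
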